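(* Let $q$ be the semi-Markov kernel of a homogeneous $d$-dimensional multi-time Markov renewal chain (so in particular $q(0_d)=O_s$). Then $\mathbbm{I}_s-q$ has a convolutional inverse, given by $$u:=(\mathbbm{I}_s-q)^{(-1)}=\sum_{n\ge0}q^{(n)}.$$
   Context: $E=\{1,\dots,s\}$; $\mathcal{M}_s(\mathbb{N}^d)$ is the set of functions $\mathbb{N}^d\to\mathbb{R}^{s\times s}$, with convolution $[A*B](k)=\sum_{l+l'=k}A(l)B(l')$, identity $\mathbbm{I}_s$ ($\mathbbm{I}_s(0_d)=I_s$, zero elsewhere), powers $A^{(0)}=\mathbbm{I}_s$, $A^{(n)}=A*A^{(n-1)}$, and convolutional inverse $A^{(-1)}$ with $A*A^{(-1)}=A^{(-1)}*A=\mathbbm{I}_s$. A homogeneous $d$-dimensional multi-time Markov renewal chain is a process $(J_n,S_n)_{n\in\mathbb{N}}$, $J_n\in E$, $S_n\in\mathbb{N}^d$, $S_0=0_d$, $S_n<S_{n+1}$ (componentwise $\le$ and not equal), such that a.s. $\mathbb{P}(J_{n+1}=j,S_{n+1}-S_n=k\mid J_{0:n},S_{0:n})=q_{J_nj}(k)$ with $q_{ij}(k)=\mathbb{P}(J_{n+1}=j,S_{n+1}-S_n=k\mid J_n=i)$ independent of $n$; $q\in\mathcal{M}_s(\mathbb{N}^d)$ is its semi-Markov kernel. The series is pointwise and finite at each point. *)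

(* Defs.v *)
From HB Require Import structures.
From mathcomp Require Import all_boot all_order all_algebra.
From mathcomp Require Import all_classical all_reals all_analysis.
Set Implicit Arguments. Unset Strict Implicit. Unset Printing Implicit Defensive.
Import Order.TTheory GRing.Theory Num.Theory.
Local Open Scope classical_set_scope.
Local Open Scope ring_scope.

Definition vec (d : nat) := {ffun 'I_d -> nat}.
Definition vzero d : vec d := [ffun=> 0%N].
Definition vle d (l k : vec d) : bool := [forall i, (l i <= k i)%N].
Definition vlt d (l k : vec d) : bool := vle l k && (l != k).
Definition vsub d (k l : vec d) : vec d := [ffun i => (k i - l i)%N].
Definition vbnd d (k : vec d) : nat := (\max_(i < d) k i)%N.
Definition vof d m (l : {ffun 'I_d -> 'I_m}) : vec d := [ffun i => nat_of_ord (l i)].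

Definition mxseq (R : pzRingType) s d := vec d -> 'M[R]_s.

Definition mId (R : pzRingType) s d : mxseq R s d :=
  fun k => if k == vzero d then 1%:M else 0.

(* [A*B](k) = sum_{l + l' = k} A(l) B(l') ; l ranges over l <= k, l' = k - l *)
Definition mconv (R : pzRingType) s d (A B : mxseq R s d) : mxseq R s d :=
  fun k => \sum_(l : {ffun 'I_d -> 'I_(vbnd k).+1} | vle (vof l) k)
             A (vof l) *m B (vsub k (vof l)).

Fixpoint mpow (R : pzRingType) s d (A : mxseq R s d) (n : nat) : mxseq R s d :=
  match n with
  | 0%N => @mId R s d
  | n'.+1 => mconv A (mpow A n')
  end.

Definition is_conv_inverse (R : pzRingType) s d (A B : mxseq R s d) : Prop :=
  (forall k, mconv A B k = @mId R s d k) /\ (forall k, mconv B A k = @mId R s d k).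

(* q is the semi-Markov kernel of a homogeneous d-dimensional multi-time
   Markov renewal chain (J_n, S_n) with values in E = 'I_s and N^d:
   S_0 = 0, S_n < S_{n+1}, and for every history (J_{0:n}, S_{0:n}) = (js, ks)
   P(J_{0:n}=js, S_{0:n}=ks, J_{n+1}=j, S_{n+1}-S_n=k)
     = q_{js_n j}(k) * P(J_{0:n}=js, S_{0:n}=ks)
   (discrete form of the a.s. conditional-probability identity). *)
Definition hist (T : Type) s d (J : nat -> T -> 'I_s) (S : nat -> T -> vec d)
  n (js : n.+1.-tuple 'I_s) (ks : n.+1.-tuple (vec d)) : set T :=
  [set w | forall m : 'I_n.+1, J m w = tnth js m /\ S m w = tnth ks m].

Definition is_MTMRC_kernel (R : realType) s d (q : mxseq R s d) : Prop :=
  exists (dsp : measure_display) (T : measurableType dsp) (P : probability T R)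
         (J : nat -> T -> 'I_s) (S : nat -> T -> vec d),
    [/\ (forall n j, measurable [set w | J n w = j]),
        (forall n k, measurable [set w | S n w = k]),
        (forall w, S 0%N w = vzero d),
        (forall n w, vlt (S n w) (S n.+1 w)) &
        (forall n (js : n.+1.-tuple 'I_s) (ks : n.+1.-tuple (vec d)) j k,
           P (hist J S js ks `&` [set w | J n.+1 w = j /\ vsub (S n.+1 w) (S n w) = k])
           = ((q k (tnth js ord_max) j)%:E * P (hist J S js ks))%E)].

(* Main.v *)
Require Import Defs.
From HB Require Import structures.
From mathcomp Require Import all_boot all_order all_algebra.
From mathcomp Require Import all_classical all_reals all_analysis.
From mathcomp Require Import zify.
Import Order.TTheory GRing.Theory Num.Theory.
Local Open Scope ring_scope.
Set Implicit Arguments. Unset Strict Implicit.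

Definition ofv d n (v : vec d) : {ffun 'I_d -> 'I_n.+1} := [ffun i => inord (v i)].

Lemma vof_ofv d n (v : vec d) i : vof (ofv n v) i = if (v i <= n)%N then v i else 0%N.
Proof. by rewrite /vof /ofv !ffunE val_insubd ltnS. Qed.

Lemma ofv_vof d n (l : {ffun 'I_d -> 'I_n.+1}) : ofv n (vof l) = l.
Proof. by apply/ffunP=> i; apply/val_inj; rewrite /ofv /vof !ffunE /= inordK. Qed.

Lemma vof_inj d n : injective (@vof d n.+1).
Proof. by move=> l1 l2 E; rewrite -(ofv_vof l1) -(ofv_vof l2) E. Qed.

Lemma vleP d (l k : vec d) : reflect (forall i, (l i <= k i)%N) (vle l k).
Proof. exact: forallP. Qed.

Lemma le_vbnd d (k : vec d) i : (k i <= vbnd k)%N.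
Proof. exact: (leq_bigmax i). Qed.

Lemma vbnd_le d (l k : vec d) : vle l k -> (vbnd l <= vbnd k)%N.
Proof.
move/vleP=> H; apply/bigmax_leqP=> i _; exact: leq_trans (H i) (le_vbnd k i).
Qed.

Lemma vof_ofv_id d n (v : vec d) : (forall i, (v i <= n)%N) -> vof (ofv n v) = v.
Proof. by move=> H; apply/ffunP=> i; rewrite vof_ofv H. Qed.

Lemma S_indep (V : Type) (z : V) (op : Monoid.com_law z) d (k : vec d) n (G : vec d -> V) :
  (vbnd k <= n)%N ->
  \big[op/z]_(l : {ffun 'I_d -> 'I_n.+1} | vle (vof l) k) G (vof l) =
  \big[op/z]_(l : {ffun 'I_d -> 'I_(vbnd k).+1} | vle (vof l) k) G (vof l).
Proof.
move=> Hn.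
rewrite (reindex_onto (fun l : {ffun 'I_d -> 'I_(vbnd k).+1} => ofv n (vof l))
   (fun l : {ffun 'I_d -> 'I_n.+1} => ofv (vbnd k) (vof l))) /=; last first.
  move=> l /vleP Hl; rewrite vof_ofv_id ?ofv_vof // => i.
  exact: leq_trans (Hl i) (le_vbnd k i).
have E : forall l : {ffun 'I_d -> 'I_(vbnd k).+1}, vof (ofv n (vof l)) = vof l.
  move=> l; apply: vof_ofv_id => i.
  by have := ltn_ord (l i); rewrite /vof ffunE => H; rewrite (leq_trans _ Hn).
apply: eq_big => l; last by rewrite E.
by rewrite E ofv_vof eqxx andbT.
Qed.

Lemma mconvE (R : pzRingType) s d (A B : mxseq R s d) k n : (vbnd k <= n)%N ->
  mconv A B k = \sum_(l : {ffun 'I_d -> 'I_n.+1} | vle (vof l) k) A (vof l) *m B (vsub k (vof l)).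
Proof. move=> Hn; rewrite /mconv. by rewrite (S_indep _ (fun l => A l *m B (vsub k l)) Hn). Qed.

Lemma vle0 d (k : vec d) : vle (vzero d) k.
Proof. by apply/vleP=> i; rewrite ffunE. Qed.

Lemma vlexx d (k : vec d) : vle k k.
Proof. by apply/vleP. Qed.

Lemma vsub0 d (k : vec d) : vsub k (vzero d) = k.
Proof. by apply/ffunP=> i; rewrite !ffunE subn0. Qed.

Lemma vsubxx d (k : vec d) : vsub k k = vzero d.
Proof. by apply/ffunP=> i; rewrite !ffunE subnn. Qed.

Lemma mconv_mIdl (R : pzRingType) s d (A : mxseq R s d) k : mconv (@mId R s d) A k = A k.
Proof.
rewrite /mconv (bigD1 (ofv (vbnd k) (vzero d))) /=; last first.
  by rewrite vof_ofv_id ?vle0 // => i; rewrite ffunE.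
rewrite vof_ofv_id; last by move=> i; rewrite ffunE.
rewrite /mId eqxx mul1mx vsub0 big1 ?addr0 // => l /andP [_ Hl].
case: eqP => [E|_]; last by rewrite mul0mx.
by move: Hl; rewrite -E ofv_vof eqxx.
Qed.

Lemma mconv_mIdr (R : pzRingType) s d (A : mxseq R s d) k : mconv A (@mId R s d) k = A k.
Proof.
rewrite /mconv (bigD1 (ofv (vbnd k) k)) /=; last first.
  by rewrite vof_ofv_id ?vlexx // => i; apply: le_vbnd.
rewrite vof_ofv_id; last by move=> i; apply: le_vbnd.
rewrite /mId vsubxx eqxx mulmx1 big1 ?addr0 // => l /andP [/vleP H1 Hl].
case: eqP => [E|_]; last by rewrite mulmx0.
suff E' : vof l = k by exfalso; move/eqP: Hl; apply; apply: vof_inj; rewrite E' vof_ofv_id // => i; apply: le_vbnd.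
apply/ffunP=> i; have := H1 i; have := congr1 (fun f : vec d => f i) E.
rewrite !ffunE /= => E2 H; apply/eqP; rewrite eqn_leq H /=.
by rewrite -subn_eq0 E2.
Qed.

Lemma mconvBl (R : pzRingType) s d (A B C : mxseq R s d) k :
  mconv (fun k => A k - B k) C k = mconv A C k - mconv B C k.
Proof. by rewrite /mconv -sumrB; apply: eq_bigr => l _; rewrite mulmxBl. Qed.

Definition vadd d (m p : vec d) : vec d := [ffun i => (m i + p i)%N].

Lemma vle_trans d (a b c : vec d) : vle a b -> vle b c -> vle a c.
Proof. move=> /vleP H1 /vleP H2; apply/vleP=> i; exact: leq_trans (H1 i) (H2 i). Qed.

Lemma vsub_le d (k m : vec d) : vle (vsub k m) k.
Proof. by apply/vleP=> i; rewrite ffunE leq_subr. Qed.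

Lemma reidx (V : Type) (z : V) (op : Monoid.com_law z) d (k m : vec d) (G : vec d -> V) :
  vle m k ->
  \big[op/z]_(l : {ffun 'I_d -> 'I_(vbnd k).+1} | vle (vof l) k && vle m (vof l)) G (vof l) =
  \big[op/z]_(p : {ffun 'I_d -> 'I_(vbnd k).+1} | vle (vof p) (vsub k m)) G (vadd m (vof p)).
Proof.
move=> /vleP Hm.
set N := vbnd k.
rewrite (reindex_onto (fun p : {ffun 'I_d -> 'I_N.+1} => ofv N (vadd m (vof p)))
   (fun l : {ffun 'I_d -> 'I_N.+1} => ofv N (vsub (vof l) m))) /=; last first.
  move=> l /andP [/vleP H1 /vleP H2].
  rewrite -[RHS]ofv_vof; congr ofv; apply/ffunP => i.
  rewrite ffunE vof_ofv !ffunE.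
  have := le_vbnd k i; have := H1 i; have := H2 i; rewrite /N /vof !ffunE; case: ifP; lia.
transitivity (\big[op/z]_(p : {ffun 'I_d -> 'I_N.+1} | vle (vof p) (vsub k m)) G (vof (ofv N (vadd m (vof p))))).
  apply: eq_bigl => p.
  apply/idP/idP.
    move=> /andP [/andP [/vleP H1 /vleP H2] /eqP H3]; apply/vleP => i.
    have H4 := congr1 (fun f : {ffun 'I_d -> 'I_N.+1} => vof f i) H3.
    have H1' := H1 i; have H2' := H2 i; have := Hm i; have := le_vbnd k i.
    rewrite vof_ofv in H1' H2'; rewrite vof_ofv in H4.
    move: H4 H1' H2'; rewrite /N !ffunE.
    case: ifP => A1; case: ifP => A2; lia.
  move=> /vleP H; have E : vof (ofv N (vadd m (vof p))) = vadd m (vof p).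
    apply: vof_ofv_id => i; rewrite ffunE; have := H i; have := le_vbnd k i; have := Hm i.
    rewrite /N /vof /vsub !ffunE; lia.
  rewrite E; apply/andP; split; [apply/andP; split|].
  - by apply/vleP=> i; have := H i; have := Hm i; rewrite /vof /vsub /vadd !ffunE; lia.
  - by apply/vleP=> i; rewrite /vadd !ffunE; lia.
  - apply/eqP; rewrite -[RHS]ofv_vof; congr ofv; apply/ffunP=> i; rewrite /vsub /vadd !ffunE; lia.
apply: eq_bigr => p /vleP H; have E : vof (ofv N (vadd m (vof p))) = vadd m (vof p).
  apply: vof_ofv_id => i; rewrite ffunE; have := H i; have := le_vbnd k i; have := Hm i.
  rewrite /N /vof /vsub !ffunE; lia.
by rewrite E.
Qed.

Lemma mconvA (R : pzRingType) s d (A B C : mxseq R s d) k :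
  mconv (mconv A B) C k = mconv A (mconv B C) k.
Proof.
set N := vbnd k.
rewrite {1}/mconv.
under eq_bigr => l Hl do rewrite (@mconvE _ _ _ A B _ N (vbnd_le Hl)) mulmx_suml.
rewrite (exchange_big_dep (fun m : {ffun 'I_d -> 'I_N.+1} => vle (vof m) k)) /=; last first.
  by move=> l m H1 H2; exact: vle_trans H2 H1.
rewrite (@mconvE _ _ _ A (mconv B C) k N (leqnn _)); apply: eq_bigr => m Hm.
rewrite (@mconvE _ _ _ B C _ N); last exact: vbnd_le (vsub_le k (vof m)).
rewrite mulmx_sumr.
rewrite (reidx _ (fun l => A (vof m) *m B (vsub l (vof m)) *m C (vsub k l)) Hm).
apply: eq_bigr => p _.
have -> : vsub (vadd (vof m) (vof p)) (vof m) = vof p.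
  by apply/ffunP=> i; rewrite !ffunE; lia.
have -> : vsub k (vadd (vof m) (vof p)) = vsub (vsub k (vof m)) (vof p).
  by apply/ffunP=> i; rewrite !ffunE; lia.
by rewrite mulmxA.
Qed.

Definition vsum d (k : vec d) : nat := (\sum_(i < d) k i)%N.

Lemma vsum_sub d (k l : vec d) : vle l k -> (vsum (vsub k l) + vsum l)%N = vsum k.
Proof.
move=> /vleP H; rewrite /vsum -big_split /=; apply: eq_bigr => i _.
by rewrite ffunE subnK.
Qed.

Lemma vsum_pos d (l : vec d) : l != vzero d -> (0 < vsum l)%N.
Proof.
apply: contraR; rewrite -eqn0Ngt /vsum sum_nat_eq0 => /forallP H.
by apply/eqP/ffunP => i; rewrite ffunE; apply/eqP; have := H i.
Qed.

Lemma mconvBr (R : pzRingType) s d (A B C : mxseq R s d) k :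
  mconv A (fun k => B k - C k) k = mconv A B k - mconv A C k.
Proof. by rewrite /mconv -sumrB; apply: eq_bigr => l _; rewrite mulmxBr. Qed.

Lemma mpow_nil (R : pzRingType) s d (q : mxseq R s d) : q (vzero d) = 0 ->
  forall n k, (vsum k < n)%N -> mpow q n k = 0.
Proof.
move=> Hq; elim=> [//|n IH] k Hk /=.
rewrite /mconv big1 // => l Hl.
case: (eqVneq (vof l) (vzero d)) => [->|H]; first by rewrite Hq mul0mx.
rewrite IH ?mulmx0 //.
have := vsum_sub Hl; have := vsum_pos H; lia.
Qed.

Lemma sum_ext (R : pzRingType) s d (q : mxseq R s d) : q (vzero d) = 0 ->
  forall k M, (vsum k < M)%N ->
  \sum_(n < M) mpow q n k = \sum_(n < (vsum k).+1) mpow q n k.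
Proof.
move=> Hq k M HM; rewrite -(subnKC HM) big_split_ord.
change (\sum_(i < (vsum k).+1) mpow q (lshift (M - (vsum k).+1) i) k + \sum_(i < M - (vsum k).+1) mpow q (rshift (vsum k).+1 i) k = \sum_(n < (vsum k).+1) mpow q n k).
rewrite [X in _ + X]big1 ?addr0 // => i _.
by apply: mpow_nil => //=; rewrite ltnS leq_addr.
Qed.

Lemma mpow_comm (R : pzRingType) s d (q : mxseq R s d) n k :
  mconv (mpow q n) q k = mpow q n.+1 k.
Proof.
elim: n k => [|n IH] k.
  by rewrite /= mconv_mIdl mconv_mIdr.
rewrite [mpow q n.+1]/= mconvA.
have -> : mconv (mpow q n) q = mpow q n.+1 by apply: funext => x; apply: IH.
by [].
Qed.

Lemma telesc (R : pzRingType) s d (q : mxseq R s d) : q (vzero d) = 0 -> forall k,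
  \sum_(n < (vsum k).+1) mpow q n k - \sum_(n < (vsum k).+1) mpow q n.+1 k = @mId R s d k.
Proof.
move=> Hq k.
rewrite big_ord_recl big_ord_recr.
change (mpow q 0 k + \sum_(i < vsum k) mpow q i.+1 k - (\sum_(i < vsum k) mpow q i.+1 k + mpow q (vsum k).+1 k) = mId R s k).
by rewrite (@mpow_nil _ _ _ q Hq (vsum k).+1) // addr0 addrK.
Qed.
Unset Implicit Arguments.
Theorem proposition7 (R : realType) (s d : nat) (q : mxseq R s d) :
  is_MTMRC_kernel q ->
  q (vzero d) = 0 ->
  exists u : mxseq R s d,
    is_conv_inverse (fun k => @mId R s d k - q k) u /\
    (forall k, exists N : nat,
        (forall n, (N <= n)%N -> mpow q n k = 0) /\
        u k = \sum_(n < N) mpow q n k).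
Proof.
move=> _ Hq.
pose u : mxseq R s d := fun k => \sum_(n < (vsum k).+1) mpow q n k.
exists u; split; last first.
  move=> k; exists (vsum k).+1; split => // n Hn; exact: mpow_nil.
split => k.
  rewrite mconvBl mconv_mIdl -(telesc Hq k); congr (_ - _).
  rewrite /mconv (eq_bigr (fun l => \sum_(n < (vsum k).+1) q (vof l) *m mpow q n (vsub k (vof l)))); last first.
    move=> l Hl; rewrite /u -mulmx_sumr (sum_ext Hq (k := vsub k (vof l)) (M := (vsum k).+1)) //.
    have := vsum_sub Hl; lia.
  by rewrite exchange_big.
rewrite mconvBr mconv_mIdr -(telesc Hq k); congr (_ - _).
rewrite /mconv (eq_bigr (fun l => \sum_(n < (vsum k).+1) mpow q n (vof l) *m q (vsub k (vof l)))); last first.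
  move=> l Hl; rewrite /u -mulmx_suml (sum_ext Hq (k := vof l) (M := (vsum k).+1)) //.
  have := vsum_sub Hl; lia.
rewrite exchange_big; apply: eq_bigr => n _.
by rewrite -mpow_comm.
Qed.
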